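(* Let $G=(V,E)$ be a network, $s,t\in V$, and $B\ge 0$ a CO-weight bound. There is an optimal solution $(\pi_1,\pi_2)$ of the CO-Constrained QoS Max-Survivability problem with bound $B$ such that all its disjoint segments are shortest disjoint segments.
   Context: A network is a directed graph $G=(V,E)$. Each link $e$ has failure probability $p_e\in(0,p_{max}]$ with $p_{max}<1$, and positive weight $w_e$. Paths are identified with link sets. A survivable connection is a pair $(\pi_1,\pi_2)$ of simple $s$–$t$ paths; the two paths may coincide. Its survivability level is $\prod_{e\in\pi_1\cap\pi_2}(1-p_e)$, equal to $1$ if empty. Its CO-weight is $\sum_{e\in\pi_1\cup\pi_2}w_e$. CO-CQMS problem: maximize survivability level subject to CO-weight $\le B$. A survivable connection is viewed as a concatenation of alternating segments: - common segments consist of links common to $\pi_1$ and $\pi_2$; - disjoint segments consist of links exclusive to one of the paths. A disjoint segment with head node $u$ and tail node $v$ is the pair formed by the subpath of $\pi_1$ from $u$ to $v$ and the subpath of $\pi_2$ from $u$ to $v$, which are link-disjoint. The weight of a disjoint segment is the total weight of its links. It is a shortest disjoint segment if its weight is minimum among all pairs of link-disjoint paths from $u$ to $v$ in $G$. *)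

(* Defs.v *)
From mathcomp Require Import all_boot all_order all_algebra.
Set Implicit Arguments. Unset Strict Implicit. Unset Printing Implicit Defensive.
Import Order.TTheory GRing.Theory Num.Theory.
Local Open Scope ring_scope.

(* A network: finite vertex type V, finite link type E, each link e goes
   from [src e] to [dst e] (directed, parallel links allowed).
   A path is a sequence of links. *)
Section Network.
Variables (V E : finType) (src dst : E -> V).

Fixpoint walkb (u v : V) (p : seq E) : bool :=
  match p with
  | [::] => u == v
  | e :: p' => (src e == u) && walkb (dst e) v p'
  end.

Definition simple_path (u v : V) (p : seq E) : bool :=
  walkb u v p && uniq (u :: map dst p).

Variable R : realFieldType.

Definition surv_level (pf : E -> R) (pi1 pi2 : seq E) : R :=
  \prod_(e : E | (e \in pi1) && (e \in pi2)) (1 - pf e).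

Definition co_weight (w : E -> R) (pi1 pi2 : seq E) : R :=
  \sum_(e : E | (e \in pi1) || (e \in pi2)) w e.

Definition co_feasible (w : E -> R) (B : R) (s t : V) (pi1 pi2 : seq E) : Prop :=
  [/\ simple_path s t pi1, simple_path s t pi2 & co_weight w pi1 pi2 <= B].

Definition co_optimal (pf w : E -> R) (B : R) (s t : V) (pi1 pi2 : seq E) : Prop :=
  co_feasible w B s t pi1 pi2 /\
  forall rho1 rho2, co_feasible w B s t rho1 rho2 ->
    surv_level pf rho1 rho2 <= surv_level pf pi1 pi2.

(* boundary conditions: the link just before / after a segment (if any) is common *)
Definition prev_common (alpha : seq E) (other : seq E) : bool :=
  if rev alpha is e :: _ then e \in other else true.
Definition next_common (beta : seq E) (other : seq E) : bool :=
  if beta is e :: _ then e \in other else true.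

(* (sigma1, sigma2) is a disjoint segment of (pi1, pi2) with head u and tail v:
   sigma1 is a subpath of pi1 from u to v, sigma2 a subpath of pi2 from u to v,
   sigma1 consists of links exclusive to pi1, sigma2 of links exclusive to pi2,
   and the segment is maximal: in each path it is delimited by common links
   (or by the ends of the path). *)
Definition disjoint_segment (pi1 pi2 sigma1 sigma2 : seq E) (u v : V) : Prop :=
  exists alpha1 beta1 alpha2 beta2,
    [/\ pi1 = alpha1 ++ sigma1 ++ beta1, pi2 = alpha2 ++ sigma2 ++ beta2,
        walkb u v sigma1, walkb u v sigma2 &
        [/\ all (fun e => e \notin pi2) sigma1, all (fun e => e \notin pi1) sigma2,
            prev_common alpha1 pi2 && next_common beta1 pi2 &
            prev_common alpha2 pi1 && next_common beta2 pi1]].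

Definition pair_weight (w : E -> R) (sigma1 sigma2 : seq E) : R :=
  \sum_(e <- sigma1) w e + \sum_(e <- sigma2) w e.

Definition shortest_disjoint (w : E -> R) (u v : V) (sigma1 sigma2 : seq E) : Prop :=
  forall rho1 rho2, simple_path u v rho1 -> simple_path u v rho2 ->
    (forall e, e \in rho1 -> e \notin rho2) ->
    pair_weight w sigma1 sigma2 <= pair_weight w rho1 rho2.

End Network.

(* Main.v *)
Require Import Defs.
From mathcomp Require Import all_boot all_order all_algebra.
From mathcomp Require Import lra.
From Stdlib Require Import ClassicalEpsilon Classical.
Import Order.TTheory GRing.Theory Num.Theory.
Set Implicit Arguments. Unset Strict Implicit. Unset Printing Implicit Defensive.

Section Walks.
Variables (V A : finType) (src dst : A -> V).
Local Notation walk := (walkb src dst).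
Local Notation spath := (simple_path src dst).

Lemma walk_cat x y z p q : walk x y p -> walk y z q -> walk x z (p ++ q).
Proof. by elim: p x => [|a p IH] x /=; [move/eqP->|case/andP=> -> /IH]. Qed.

Lemma walk_catE x z p q : walk x z (p ++ q) -> exists y, walk x y p /\ walk y z q.
Proof.
elim: p x => [|a p IH] x /=; first by move=> h; exists x; rewrite eqxx.
by case/andP=> /eqP-> /IH [y [h1 h2]]; exists y; rewrite eqxx h1.
Qed.

Lemma walk_last x y p : walk x y p -> y = last x (map dst p).
Proof. by elim: p x => [|a p IH] x /=; [move/eqP|case/andP=> _ /IH]. Qed.

Lemma walk_head x y a p : walk x y (a :: p) -> x = src a.
Proof. by case/andP=> /eqP. Qed.

Lemma spath_uniq x y p : spath x y p -> uniq p.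
Proof. by case/andP=> _ /= /andP[_]; apply: map_uniq. Qed.

Lemma spath_suffix x y p1 f p2 : spath x y (p1 ++ f :: p2) -> spath (dst f) y p2.
Proof.
case/andP=> hw hu; apply/andP; split.
  by have [z [_ /= /andP[_ ->]]] := walk_catE hw.
by move: hu; rewrite map_cat /= => /andP[_]; rewrite cat_uniq => /and3P[_ _].
Qed.

Lemma shortcut x y p : walk x y p -> exists p', spath x y p' /\ {subset p' <= p}.
Proof.
elim: p x => [|e p IH] x /=.
  by move=> h; exists [::]; rewrite /simple_path /= h.
case/andP=> /eqP hx /IH [p'' [hs hsub]].
have [hin|hnin] := boolP (x \in dst e :: map dst p'').
  rewrite inE in hin; case/orP: hin => [/eqP hxe|].
    by exists p''; rewrite hxe; split=> // a /hsub; rewrite inE orbC => ->.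
  case/mapP=> f hf hxf; case/splitPr: hf hs hsub => p1 p2 hs hsub.
  exists p2; split; first by rewrite hxf; apply: spath_suffix hs.
  by move=> a ha; rewrite inE hsub ?orbT // mem_cat inE ha !orbT.
exists (e :: p''); split; last by move=> a; rewrite !inE => /orP[->|/hsub->]; rewrite ?orbT.
case/andP: hs => hw hu; apply/andP; split; first by rewrite /= hx eqxx.
rewrite /= hnin; exact: hu.
Qed.

Lemma walk_leave (S : {set V}) x y p : walk x y p -> x \in S -> y \notin S ->
  exists2 a, a \in p & (src a \in S) && (dst a \notin S).
Proof.
elim: p x => [|a p IH] x /=; first by move/eqP->; move=> ->.
case/andP=> /eqP hx hw hxS hy.
have [hd|hd] := boolP (dst a \in S).
  by have [b hb hb2] := IH _ hw hd hy; exists b; rewrite // inE hb orbT.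
by exists a; rewrite ?inE ?eqxx // hx hxS.
Qed.

Lemma walk_enter1 (S : {set V}) x y p b : walk x y p -> x \notin S -> b \in p ->
  src b \in S -> exists2 a, a \in p & (src a \notin S) && (dst a \in S).
Proof.
elim: p x => [|a p IH] x //= /andP[/eqP hx hw] hxS.
rewrite inE => /orP[/eqP->|hb] hbS; first by rewrite -hx hbS in hxS.
have [hd|hd] := boolP (dst a \in S).
  by exists a; rewrite ?inE ?eqxx // hx hxS.
by have [c hc hc2] := IH _ hw hd hb hbS; exists c; rewrite // inE hc orbT.
Qed.

Lemma walk_enter2 (S : {set V}) x y p b1 b2 : walk x y p -> b1 != b2 -> b1 \in p -> b2 \in p ->
  (src b1 \in S) && (dst b1 \notin S) -> (src b2 \in S) && (dst b2 \notin S) ->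
  exists2 a, a \in p & (src a \notin S) && (dst a \in S).
Proof.
elim: p x => [|a p IH] x //= /andP[/eqP hx hw] hne.
rewrite !inE => /orP[/eqP e1|h1] /orP[/eqP e2|h2] /andP[s1 d1] /andP[s2 d2].
- by rewrite e1 e2 eqxx in hne.
- have hd : dst a \notin S by rewrite -e1.
  by have [c hc hc2] := walk_enter1 hw hd h2 s2; exists c; rewrite // inE hc orbT.
- have hd : dst a \notin S by rewrite -e2.
  by have [c hc hc2] := walk_enter1 hw hd h1 s1; exists c; rewrite // inE hc orbT.
- have [c hc hc2] := IH _ hw hne h1 h2 (introT andP (conj s1 d1)) (introT andP (conj s2 d2)).
  by exists c; rewrite // inE hc orbT.
Qed.

End Walks.

Definition pb (P : Prop) : bool := if excluded_middle_informative P then true else false.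
Lemma pbP P : reflect P (pb P).
Proof. by rewrite /pb; case: excluded_middle_informative => h; constructor. Qed.

Lemma split_last (T : eqType) (p : pred T) q : has p q ->
  exists q1 x q2, [/\ q = q1 ++ x :: q2, p x & ~~ has p q2].
Proof.
elim: q => [|y q IH] //= /orP[hy|hq].
  have [hq|hq] := boolP (has p q); last by exists [::], y, q.
  by have [q1 [x [q2 [-> h1 h2]]]] := IH hq; exists (y :: q1), x, q2.
by have [q1 [x [q2 [-> h1 h2]]]] := IH hq; exists (y :: q1), x, q2.
Qed.

Lemma split_first (T : Type) (q : seq (T * bool)) : has (fun a => ~~ a.2) q ->
  exists q1 e q2, q = q1 ++ (e, false) :: q2 /\ all snd q1.
Proof.
elim: q => [|[y b] q IH] //=; case: b => /= h.
  by have [q1 [e [q2 [-> h1]]]] := IH h; exists ((y,true) :: q1), e, q2.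
by exists [::], y, q.
Qed.

Lemma count_nsnd (T : Type) (q : seq (T * bool)) : (count (fun a => ~~ a.2) q == 0) = all snd q.
Proof. by elim: q => [|[x []] q IH] //=. Qed.

Section Menger.
Variables (V A : finType) (src dst : A -> V) (L : pred A) (s t : V).
Local Notation walk := (walkb src dst).
Definition rsrc (a : A * bool) := if a.2 then src a.1 else dst a.1.
Definition rdst (a : A * bool) := if a.2 then dst a.1 else src a.1.
Local Notation rwalk := (walkb rsrc rdst).
Definition okr (P : seq A) (a : A * bool) := L a.1 && (a.2 == (a.1 \notin P)).

Lemma fwd_walk x y p : walk x y p -> rwalk x y (map (fun a => (a,true)) p).
Proof. by elim: p x => [|a p IH] x //= /andP[-> /IH]. Qed.

Lemma walk_fwd x y q : all snd q -> rwalk x y q -> walk x y (map fst q).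
Proof. by elim: q x => [|[a b] q IH] x //= /andP[/= hb hq]; rewrite /rsrc /rdst hb /= => /andP[-> /IH->]. Qed.

Lemma uniq_fst P q : all (okr P) q -> uniq q -> uniq (map fst q).
Proof.
move=> /allP hok hu; rewrite map_inj_in_uniq // => [[a b] [a' b']] h1 h2 /= ea.
move: (hok _ h1) (hok _ h2); rewrite /okr /= ea => /andP[_ /eqP->] /andP[_ /eqP->] //.
Qed.

Hypothesis cut : forall S : {set V}, s \in S -> t \notin S ->
  exists a1 a2, [/\ a1 != a2, L a1, L a2, (src a1 \in S) && (dst a1 \notin S)
                  & (src a2 \in S) && (dst a2 \notin S)].

Lemma resid P : all L P -> (P = [::] \/ walk s t P) ->
  exists Q, [/\ rwalk s t Q, all (okr P) Q & uniq Q].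
Proof.
move=> hL hP.
pose reach x := exists q, rwalk s x q /\ all (okr P) q.
pose S := [set x | pb (reach x)].
have hS x : (x \in S) = pb (reach x) by rewrite inE.
have hs : s \in S by rewrite hS; apply/pbP; exists [::]; rewrite /= eqxx.
have [ht|ht] := boolP (t \in S).
  move: ht; rewrite hS => /pbP [q [hq hok]].
  have [q' [/andP[hw hu] hsub]] := shortcut hq.
  exists q'; split => //; last by case/andP: hu => _ /map_uniq.
  by apply/allP => a /hsub; apply: (allP hok).
have ext q x a : rwalk s x q -> all (okr P) q -> rsrc a = x -> okr P a -> rdst a \in S.
  move=> hq hok hx ha; rewrite hS; apply/pbP; exists (q ++ [:: a]); split.
    by apply: walk_cat hq _; rewrite /= hx !eqxx.
  by rewrite all_cat hok /= ha.
have [a1 [a2 [hne hL1 hL2 /andP[s1 d1] /andP[s2 d2]]]] := cut hs ht.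
have inP a : L a -> src a \in S -> dst a \notin S -> a \in P.
  move=> hLa hsa hda; apply/negPn/negP => hn.
  move: hsa; rewrite hS => /pbP [q [hq hok]].
  by move: (ext q (src a) (a, true) hq hok erefl); rewrite /okr /= hLa hn eqxx => /(_ erefl); rewrite (negbTE hda).
have h1 := inP _ hL1 s1 d1; have h2 := inP _ hL2 s2 d2.
case: hP => [hP|hw]; first by rewrite hP in h1.
have [f hf /andP[sf df]] := walk_enter2 hw hne h1 h2 (introT andP (conj s1 d1)) (introT andP (conj s2 d2)).
move: df; rewrite hS => /pbP [q [hq hok]].
move: (ext q (dst f) (f, false) hq hok erefl).
by rewrite /okr /= hf (allP hL _ hf) /= => /(_ erefl); rewrite (negbTE sf).
Qed.

Definition goal := exists p1 p2, [/\ walk s t p1, walk s t p2, all L p1, all L p2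
  & forall a, a \in p1 -> a \notin p2].

Lemma augment n P Q : count (fun a => ~~ a.2) Q <= n -> walk s t P -> uniq P -> all L P ->
  rwalk s t Q -> all (okr P) Q -> uniq Q -> goal.
Proof.
elim: n P Q => [|n IH] P Q hc hP huP hLP hQ hok huQ.
  have hall : all snd Q.
    by rewrite -count_nsnd -leqn0.
  exists P, (map fst Q); split => //; first exact: walk_fwd.
    by apply/allP => a /mapP [[a' b] ha ->]; case/andP: (allP hok _ ha).
  move=> a ha; apply/negP => /mapP [[a' b] ha' ea]; rewrite /= in ea; subst a.
  move: (allP hok _ ha') (allP hall _ ha'); rewrite /okr /= ha => /andP[_ /eqP->] //.
have [hall|hhas] := boolP (all snd Q).
  by apply: (IH P Q) => //; move: hall; rewrite -count_nsnd => /eqP->.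
have [q1 [e [q2 [hQe hq1]]]] : exists q1 e q2, Q = q1 ++ (e, false) :: q2 /\ all snd q1.
  by apply: split_first; move: hhas; rewrite -has_predC; apply: sub_has => a /=.
have huF := uniq_fst hok huQ.
move: huF hok hQ huQ hc; rewrite hQe => huF hok hQ huQ hc.
move: hok; rewrite all_cat /= => /and3P[hok1 hoke hok2].
have heP : e \in P by move: hoke; rewrite /okr /= eq_sym eqbF_neg negbK => /andP[].
have [z [hw1 /= /andP[/eqP hz hw2]]] := walk_catE hQ.
rewrite /rsrc /rdst /= in hz hw2.
case/splitPr: heP hP huP hLP hok1 hok2 => a b hP huP hLP hok1 hok2.
have [z' [hwa /= /andP[/eqP hz' hwb]]] := walk_catE hP.
set P' := map fst q1 ++ b.
have q1notP x : x \in map fst q1 -> x \notin a ++ e :: b.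
  case/mapP=> [[x' bb] hx ->]; move: (allP hok1 _ hx) (allP hq1 _ hx).
  by rewrite /okr /= => /andP[_ /eqP->] ->.
have hwP' : walk s t P' by apply: walk_cat (walk_fwd hq1 hw1) _; rewrite -hz.
have huP' : uniq P'.
  rewrite cat_uniq; apply/and3P; split.
  - by move: huF; rewrite map_cat cat_uniq => /andP[].
  - apply/hasP => -[x hxb hx]; move: (q1notP _ hx); rewrite mem_cat inE hxb !orbT //.
  - by move: huP; rewrite cat_uniq => /and3P[_ _ /andP[]].
have hLP' : all L P'.
  rewrite all_cat; apply/andP; split; last by move: hLP; rewrite all_cat /= => /and3P[].
  by apply/allP => x /mapP [[x' bb] hx ->]; case/andP: (allP hok1 _ hx).
have [hab hbb] : [/\ (forall x, x \in a -> x \notin b) & e \notin b].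
  move: huP; rewrite cat_uniq /= => /and3P[_ hh /andP[he _]]; split => // x hx.
  by apply/negP => hxb; move: hh; rewrite negb_or => /andP[_ /negP]; apply; apply/hasP; exists x.
have hae : e \notin a.
  by move: huP; rewrite cat_uniq => /and3P[_ /negP hh _]; apply/negP => hea; apply: hh; apply/hasP; exists e; rewrite ?inE ?eqxx.
have fin (a0 : seq A) (q0 : seq (A * bool)) : {subset a0 <= a} -> uniq a0 ->
    rwalk s t (map (fun x => (x, true)) a0 ++ q0) -> {subset q0 <= q2} -> uniq q0 ->
    ~~ has (fun y => y.1 \in a) q0 -> count (fun y => ~~ y.2) q0 <= count (fun y => ~~ y.2) q2 -> goal.
  move=> hsa hua hw hsq huq hnh hcq.
  apply: (IH P' (map (fun x => (x, true)) a0 ++ q0)) => //.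
  - rewrite count_cat (_ : count _ (map _ _) = 0); last by elim: (a0) => //.
    move: hc; rewrite count_cat /= (_ : count _ q1 = 0).
      by rewrite add0n add1n ltnS => h; apply: leq_trans h.
    by apply/eqP; rewrite count_nsnd.
  - rewrite all_cat; apply/andP; split.
      apply/allP => y /mapP [x hx ->]; rewrite /okr /=.
      rewrite (allP hLP x); last by rewrite mem_cat hsa.
      rewrite /P' mem_cat negb_or (negbTE (hab _ (hsa _ hx))) andbT.
      apply/negP => /q1notP; rewrite mem_cat hsa //.
    apply/allP => -[h bb] hy; move: (allP hok2 _ (hsq _ hy)); rewrite /okr /= => /andP[-> /eqP->] /=.
    have hha : h \notin a by apply/negP => ha; move/hasP: hnh; apply; exists (h, bb).
    have hhe : h != e.
      apply/negP => /eqP hhe; move: huF; rewrite map_cat cat_uniq /= => /and3P[_ _ /andP[/negP []]].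
      by rewrite -hhe; apply/mapP; exists (h, bb) => //; apply: hsq.
    have hhq1 : h \notin map fst q1.
      apply/negP => hq; move: huF; rewrite map_cat cat_uniq => /and3P[_ /negP hn _]; apply: hn.
      apply/hasP; exists h; rewrite // inE; apply/orP; right; apply/mapP; exists (h, bb) => //; exact: hsq.
    by rewrite /P' !mem_cat inE (negbTE hha) (negbTE hhe) (negbTE hhq1).
  - rewrite cat_uniq huq andbT map_inj_uniq ?hua; last by move=> x y [].
    apply/hasP => -[[x bb] hx /mapP [y hy [exy ebb]]]; subst; move/hasP: hnh; apply.
    by exists (y, true) => //; apply: hsa.
have [hh|hh] := boolP (has (fun y => y.1 \in a) q2).
  have [q21 [[g bg] [q22 [hq2 /= hga hnh]]]] := split_last hh.
  have [a1 [a2 ea]] : exists a1 a2, a = a1 ++ g :: a2 by case/splitPr: hga => a1 a2; exists a1, a2.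
  have hua : uniq a by move: huP; rewrite cat_uniq => /andP[].
  have hbg : bg = false.
    have hgP : g \in a ++ e :: b by rewrite mem_cat hga.
    by move: (allP hok2 (g, bg)); rewrite hq2 mem_cat inE eqxx orbT /okr /= hgP => /(_ isT) /andP[_ /eqP].
  subst bg.
  apply: (fin a1 q22).
  - by move=> x hx; rewrite ea mem_cat hx.
  - by move: hua; rewrite ea cat_uniq => /andP[].
  - rewrite ea in hwa; have [y [hy1 /= /andP[/eqP hy2 _]]] := walk_catE hwa.
    rewrite hq2 in hw2; have [y' [_ /= /andP[_ hy3]]] := walk_catE hw2.
    by apply: walk_cat (fwd_walk hy1) _; rewrite /rdst /= in hy3; rewrite -hy2.
  - by move=> x hx; rewrite hq2 mem_cat inE hx !orbT.
  - by move: huQ; rewrite hq2 -cat_cons !cat_uniq => /and3P[_ _] /and3P[_ _] /andP[].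
  - by [].
  - by rewrite hq2 count_cat /= addnA leq_addl.
apply: (fin a q2) => //.
- by move: huP; rewrite cat_uniq => /andP[].
- by apply: walk_cat (fwd_walk hwa) _; rewrite -hz'.
- by move: huQ; rewrite cat_uniq => /and3P[_ _] /andP[].
Qed.

Lemma menger2 : goal.
Proof.
have [Q0 [hQ0 hok0 hu0]] := resid (P := [::]) isT (or_introl erefl).
have hall : all snd Q0 by apply/allP => a ha; move: (allP hok0 _ ha); rewrite /okr => /andP[_ /eqP->].
set P := map fst Q0.
have hP : walk s t P by apply: walk_fwd.
have huP : uniq P := uniq_fst hok0 hu0.
have hLP : all L P by apply/allP => x /mapP [[x' bb] hx ->]; case/andP: (allP hok0 _ hx).
have [Q [hQ hok hu]] := resid hLP (or_intror hP).
exact: (augment (leqnn _) hP huP hLP hQ hok hu).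
Qed.
End Menger.

Local Open Scope ring_scope.

Lemma ptw (R : realFieldType) (x : R) (a1 b1 s1 a2 b2 s2 r1 r2 : bool) : 0 <= x ->
  (s1 -> [&& ~~ a1, ~~ b1 & ~~ (a2 || (s2 || b2))]) ->
  (s2 -> [&& ~~ a2, ~~ b2 & ~~ (a1 || (s1 || b1))]) ->
  (if [|| a1, b1, a2, b2, r1 | r2] then x else 0) + (if s1 then x else 0) + (if s2 then x else 0)
  <= (if (a1 || (s1 || b1)) || (a2 || (s2 || b2)) then x else 0) + (if r1 then x else 0) + (if r2 then x else 0).
Proof.
case: a1 b1 s1 a2 b2 s2 r1 r2 => [] [] [] [] [] [] [] [] hx h1 h2 /=;
  try (by have := h1 isT); try (by have := h2 isT); lra.
Qed.

Lemma uniq3 (T : eqType) (a s b : seq T) x : uniq (a ++ s ++ b) -> x \in s -> (x \notin a) && (x \notin b).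
Proof.
rewrite !cat_uniq => /and3P[_ h1 /and3P[_ h2 _]] hx; apply/andP; split.
  by apply/negP => ha; move/negP: h1; apply; apply/hasP; exists x => //; rewrite mem_cat hx.
by apply/negP => hb; move/negP: h2; apply; apply/hasP; exists x.
Qed.

Definition projE (E : Type) (x : E + E) : E := match x with inl e => e | inr e => e end.

Section Improve.
Variables (V E : finType) (src dst : E -> V) (R : realFieldType) (w : E -> R) (s t : V).
Hypothesis hw : forall e, 0 < w e.
Local Notation walk := (walkb src dst).
Local Notation spath := (simple_path src dst).

Lemma closed_empty x y a sg b u : spath x y (a ++ sg ++ b) -> walk u u sg -> sg = [::].
Proof.
case: sg => [//|f sg] /andP[hw' hu] hc; exfalso.
have [z1 [h1 h2]] := walk_catE hw'.
have [z2 [h3 _]] := walk_catE h2.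
have ez1 := walk_head h3; have eu := walk_head hc.
have eu2 := walk_last hc; have hz1 := walk_last h1.
move: hu; rewrite !map_cat -cat_cons cat_uniq => /and3P[_ /negP hn _]; apply: hn.
apply/hasP; exists u.
  by rewrite mem_cat; apply/orP; left; rewrite {1}eu2 /=; apply: mem_last.
by rewrite eu -ez1 hz1; apply: mem_last.
Qed.

Lemma seg_walks x y a sg b u v : spath x y (a ++ sg ++ b) -> walk u v sg -> sg != [::] ->
  walk x u a /\ walk v y b.
Proof.
case: sg => [//|f sg] /andP[hw' _] hs _.
have [z1 [h1 h2]] := walk_catE hw'.
have [z2 [h3 h4]] := walk_catE h2.
have e1 : z1 = u by rewrite (walk_head h3) (walk_head hs).
subst z1; have e2 : z2 = v by rewrite (walk_last h3) (walk_last hs).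
by subst z2.
Qed.

Lemma walk_proj x y (p : seq (E + E)) :
  walkb (fun a => src (projE a)) (fun a => dst (projE a)) x y p = walk x y (map (@projE E) p).
Proof. by elim: p x => //= a p IH x; rewrite IH. Qed.

Lemma pw_ge0 r1 r2 : 0 <= pair_weight w r1 r2.
Proof. by rewrite /pair_weight addr_ge0 // sumr_ge0 // => e _; apply: ltW. Qed.

Lemma improve pi1 pi2 sg1 sg2 u v r1 r2 :
  spath s t pi1 -> spath s t pi2 -> disjoint_segment src dst pi1 pi2 sg1 sg2 u v ->
  spath u v r1 -> spath u v r2 -> (forall e, e \in r1 -> e \notin r2) ->
  pair_weight w r1 r2 < pair_weight w sg1 sg2 ->
  exists P1 P2, [/\ spath s t P1, spath s t P2,
     (forall e, e \in P1 -> e \in P2 -> (e \in pi1) && (e \in pi2)) &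
     co_weight w P1 P2 < co_weight w pi1 pi2].
Proof.
move=> hp1 hp2 [a1 [b1 [a2 [b2 [e1 e2 hs1 hs2 [hx1 hx2 _ _]]]]]] hr1 hr2 hdis hlt.
subst pi1 pi2.
have hu1 := spath_uniq hp1; have hu2 := spath_uniq hp2.
have hne1 : sg1 != [::].
  apply/eqP => h; subst sg1; move/eqP: hs1 => euv; subst v.
  have h2 := closed_empty hp2 hs2; subst sg2.
  by move: hlt; rewrite /pair_weight !big_nil addr0 ltNge pw_ge0.
have hne2 : sg2 != [::].
  apply/eqP => h; subst sg2; move/eqP: hs2 => euv; subst v.
  have h1 := closed_empty hp1 hs1; subst sg1.
  by move: hlt; rewrite /pair_weight !big_nil addr0 ltNge pw_ge0.
have [wa1 wb1] := seg_walks hp1 hs1 hne1.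
have [wa2 wb2] := seg_walks hp2 hs2 hne2.
set pi1 := a1 ++ sg1 ++ b1; set pi2 := a2 ++ sg2 ++ b2.
pose inH e := [|| e \in a1, e \in b1, e \in a2, e \in b2, e \in r1 | e \in r2].
pose C e := (e \in pi1) && (e \in pi2).
have hCH e : C e -> inH e.
  move=> /andP[]; rewrite {1}/pi1 !mem_cat => /or3P[h|h|h] h2; rewrite /inH ?h ?orbT //.
  by move: (allP hx1 _ h); rewrite /pi2 !mem_cat h2.
pose L' (x : E + E) := match x with inl e => inH e | inr e => C e end.
have cut : forall S : {set V}, s \in S -> t \notin S ->
  exists x1 x2, [/\ x1 != x2, L' x1, L' x2,
     (src (projE x1) \in S) && (dst (projE x1) \notin S)
   & (src (projE x2) \in S) && (dst (projE x2) \notin S)].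
  move=> S hs ht.
  have twoC (p q : seq E) x y : walk x y p -> walk x y q -> x \in S -> y \notin S ->
      (forall e, e \in p -> inH e) -> (forall e, e \in q -> inH e) -> (forall e, e \in p -> e \in q -> C e) ->
      exists x1 x2, [/\ x1 != x2, L' x1, L' x2,
       (src (projE x1) \in S) && (dst (projE x1) \notin S)
     & (src (projE x2) \in S) && (dst (projE x2) \notin S)].
    move=> hp hq hx hy hsp hsq hpq.
    have [f1 hf1 l1] := walk_leave hp hx hy; have [f2 hf2 l2] := walk_leave hq hx hy.
    have [ef|nef] := eqVneq f1 f2.
      by subst f2; exists (inl f1), (inr f1); split; [ by [] | exact: (hsp _ hf1) | exact: (hpq _ hf1 hf2) | exact: l1 | exact: l1 ].
    exists (inl f1), (inl f2); split; [ apply: contra nef => /eqP [->] // | exact: (hsp _ hf1) | exact: (hsq _ hf2) | exact: l1 | exact: l2 ].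
  have [hu|hu] := boolP (u \in S).
    have [hv|hv] := boolP (v \in S).
      apply: (twoC b1 b2 v t) => //; try by move=> e he; rewrite /inH he ?orbT.
      by move=> e h1 h2; rewrite /C /pi1 /pi2 !mem_cat h1 h2 ?orbT.
    case/andP: hr1 => wr1 _; case/andP: hr2 => wr2 _.
    apply: (twoC r1 r2 u v) => //; try by move=> e he; rewrite /inH he ?orbT.
    by move=> e h1 h2; move: (hdis _ h1); rewrite h2.
  apply: (twoC a1 a2 s u) => //; try by move=> e he; rewrite /inH he ?orbT.
  by move=> e h1 h2; rewrite /C /pi1 /pi2 !mem_cat h1 h2 ?orbT.
case: (menger2 cut) => p1 [p2 [hw1 hw2 hL1 hL2 hd]].
rewrite walk_proj in hw1; rewrite walk_proj in hw2.
have [P1 [hP1 hsub1]] := shortcut hw1.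
have [P2 [hP2 hsub2]] := shortcut hw2.
have inHp p e : all L' p -> e \in map (@projE E) p -> inH e.
  move=> hL /mapP [[f|f] hf ->]; move: (allP hL _ hf) => //=; exact: hCH.
have PH e : (e \in P1) || (e \in P2) -> inH e.
  by case/orP => [/hsub1|/hsub2]; apply: inHp.
exists P1, P2; split => //.
  move=> e /hsub1 /mapP [x1 hy1 ex1] /hsub2 /mapP [x2 hy2 ex2].
  case: x1 hy1 ex1 => [f|f] hy1 /= ef; case: x2 hy2 ex2 => [g|g] hy2 /= eg; subst.
  - by move: (hd _ hy1); rewrite hy2.
  - exact: (allP hL2 _ hy2).
  - exact: (allP hL1 _ hy1).
  - by move: (hd _ hy1); rewrite hy2.
have step1 : co_weight w P1 P2 <= \sum_e (if inH e then w e else 0).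
  rewrite /co_weight big_mkcond /=; apply: ler_sum => e _.
  case: ifP => h; first by rewrite (PH _ h).
  by case: ifP => // _; apply: ltW.
have seqsum (p : seq E) : uniq p -> \sum_(e <- p) w e = \sum_e (if e \in p then w e else 0).
  by move=> hu; rewrite big_uniq // big_mkcond.
have hus1 : uniq sg1 by move: hu1; rewrite !cat_uniq => /and3P[_ _ /and3P[]].
have hus2 : uniq sg2 by move: hu2; rewrite !cat_uniq => /and3P[_ _ /and3P[]].
have key : \sum_e (if inH e then w e else 0) + \sum_e (if e \in sg1 then w e else 0)
    + \sum_e (if e \in sg2 then w e else 0)
  <= \sum_e (if (e \in pi1) || (e \in pi2) then w e else 0) + \sum_e (if e \in r1 then w e else 0)
    + \sum_e (if e \in r2 then w e else 0).
  rewrite -!big_split /=; apply: ler_sum => e _.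
  rewrite /inH /pi1 /pi2 !mem_cat; apply: ptw; first exact: ltW.
    move=> h; case/andP: (uniq3 hu1 h) => -> -> /=.
    by move: (allP hx1 _ h); rewrite /pi2 !mem_cat.
  move=> h; case/andP: (uniq3 hu2 h) => -> -> /=.
  by move: (allP hx2 _ h); rewrite /pi1 !mem_cat.
have hcw : co_weight w pi1 pi2 = \sum_e (if (e \in pi1) || (e \in pi2) then w e else 0).
  by rewrite /co_weight big_mkcond.
move: hlt; rewrite /pair_weight !seqsum //; try exact: spath_uniq hr1; try exact: spath_uniq hr2.
move=> hlt; apply: le_lt_trans step1 _; rewrite hcw; lra.
Qed.
End Improve.

Section Best.
Variables (V E : finType) (src dst : E -> V) (R : realFieldType) (pf w : E -> R) (s t : V) (B : R).
Local Notation feas := (co_feasible src dst w B s t).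

Definition keyC (p1 p2 : seq E) : {set E} := [set e | (e \in p1) && (e \in p2)].
Definition keyU (p1 p2 : seq E) : {set E} := [set e | (e \in p1) || (e \in p2)].
Definition svK (K : {set E}) := \prod_(e in K) (1 - pf e).
Definition wtK (K : {set E}) := \sum_(e in K) w e.
Definition better (K' K : {set E} * {set E}) :=
  (svK K.1 < svK K'.1) || ((svK K'.1 == svK K.1) && (wtK K'.2 < wtK K.2)).
Definition key p1 p2 := (keyC p1 p2, keyU p1 p2).
Definition Nb K := #|[set K' | better K' K]|.

Lemma surv_key p1 p2 : surv_level pf p1 p2 = svK (keyC p1 p2).
Proof. by rewrite /surv_level /svK; apply: eq_bigl => e; rewrite inE. Qed.
Lemma cow_key p1 p2 : co_weight w p1 p2 = wtK (keyU p1 p2).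
Proof. by rewrite /co_weight /wtK; apply: eq_bigl => e; rewrite inE. Qed.

Lemma better_irr K : ~~ better K K.
Proof. by rewrite /better ltxx eqxx ltxx. Qed.

Lemma better_trans K1 K2 K3 : better K1 K2 -> better K2 K3 -> better K1 K3.
Proof.
rewrite /better => /orP[h1|/andP[/eqP e1 h1]] /orP[h2|/andP[/eqP e2 h2]].
- by rewrite (lt_trans h2 h1).
- by rewrite -e2 h1.
- by rewrite e1 h2.
- by rewrite e1 e2 eqxx (lt_trans h1 h2) orbT.
Qed.

Lemma best p1 p2 : feas p1 p2 -> exists q1 q2, feas q1 q2 /\
  forall r1 r2, feas r1 r2 -> ~~ better (key r1 r2) (key q1 q2).
Proof.
suff H : forall n q1 q2, (Nb (key q1 q2) < n)%N -> feas q1 q2 -> exists q1 q2, feas q1 q2 /\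
  forall r1 r2, feas r1 r2 -> ~~ better (key r1 r2) (key q1 q2).
  by move=> hf; apply: (H (Nb (key p1 p2)).+1).
elim=> [//|n IH] q1 q2 hN hf.
case: (classic (exists r1 r2, feas r1 r2 /\ better (key r1 r2) (key q1 q2))) => [[r1 [r2 [hr hb]]]|hno].
  apply: (IH r1 r2) => //.
  have h : (Nb (key r1 r2) < Nb (key q1 q2))%N.
    apply: proper_card; apply/properP; split.
      by apply/subsetP => K; rewrite !inE => hK; apply: better_trans hK hb.
    by exists (key r1 r2); rewrite !inE // better_irr.
  by rewrite ltnS in hN; apply: leq_trans h hN.
by exists q1, q2; split => // r1 r2 hr; apply/negP => hb; apply: hno; exists r1, r2; split.
Qed.
End Best.

Theorem lemma6 (V E : finType) (src dst : E -> V) (R : realFieldType)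
  (pf w : E -> R) (pmax : R) (s t : V) (B : R)
  (hp : forall e, 0 < pf e <= pmax) (hpmax : pmax < 1)
  (hw : forall e, 0 < w e) (hB : 0 <= B)
  (hfeas : exists pi1 pi2, co_feasible src dst w B s t pi1 pi2) :
  exists pi1 pi2,
    co_optimal src dst pf w B s t pi1 pi2 /\
    forall sigma1 sigma2 u v, disjoint_segment src dst pi1 pi2 sigma1 sigma2 u v ->
      shortest_disjoint src dst w u v sigma1 sigma2.
Proof.
case: hfeas => p1 [p2 hf].
have [q1 [q2 [hq hbest]]] := best pf hf.
exists q1, q2; split.
  split => // r1 r2 hr; move: (hbest _ _ hr).
  by rewrite /better /= -!surv_key negb_or => /andP[h _]; rewrite leNgt.
move=> sg1 sg2 u v hseg r1 r2 hr1 hr2 hdis; rewrite leNgt; apply/negP => hlt.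
case: (hq) => hq1 hq2 hqB.
have [P1 [P2 [hP1 hP2 hcom hcw]]] := improve hw hq1 hq2 hseg hr1 hr2 hdis hlt.
have hfP : co_feasible src dst w B s t P1 P2.
  by split => //; apply: ltW (lt_le_trans hcw hqB).
have hge : surv_level pf q1 q2 <= surv_level pf P1 P2.
  rewrite /surv_level big_mkcond [X in _ <= X]big_mkcond /=; apply: ler_prod => e _.
  have [hp0 hp1] : 0 < pf e /\ pf e < 1.
    by case/andP: (hp e) => h1 h2; split => //; apply: le_lt_trans h2 hpmax.
  case: ifP => hC; case: ifP => hPe.
  - by rewrite lexx andbT; lra.
  - by apply/andP; split; lra.
  - by move/andP: hPe => [h1 h2]; move: (hcom e h1 h2); rewrite hC.
  - by rewrite ler01 lexx.
move: (hbest _ _ hfP); rewrite /better /= -!surv_key -!cow_key => /negP; apply.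

move: hge; rewrite !surv_key le_eqVlt => /orP[/eqP e|h].
  by rewrite e eqxx hcw orbT.
by rewrite h.
Qed.
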